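(* Biased Dissolution restricted to instances whose graph $G=(V,E)$ is a complete graph is solvable in $O(|V|^2)$ time (assuming constant-time arithmetic operations).
   Context: For $V'\subseteq V(G)$ let $Z(V',G):=\{(x,y)\mid x\in V',\ y\in V(G)\setminus V',\ \{x,y\}\in E(G)\}$. For positive integers $s,\Delta_s$, an $(s,\Delta_s)$-dissolution for an undirected graph $G$ is a pair $(D,z)$ with $D\subset V(G)$ and $z\colon Z(D,G)\to\{0,\dots,s\}$ such that (a) each $v'\in D$ satisfies $\sum_{(v',v)\in Z(D,G)} z(v',v)=s$, and (b) each $v\in V(G)\setminus D$ satisfies $\sum_{(v',v)\in Z(D,G)} z(v',v)=\Delta_s$. Given $\alpha\colon V(G)\to\{0,\dots,s\}$ and an integer $r_\alpha$, a tuple $(D,z,z_\alpha,R_\alpha)$ is an $r_\alpha$-biased $(s,\Delta_s)$-dissolution for $(G,\alpha)$ if $(D,z)$ is an $(s,\Delta_s)$-dissolution, $z_\alpha\colon Z(D,G)\to\{0,\dots,s\}$, $R_\alpha\subseteq V(G)\setminus D$ with $|R_\alpha|=r_\alpha$, and (c) $z_\alpha(v',v)\le z(v',v)$ for all $(v',v)\in Z(D,G)$; (d) each $v'\in D$ satisfies $\sum_{(v',v)\in Z(D,G)} z_\alpha(v',v)=\alpha(v')$; (e) each $v\in R_\alpha$ satisfies $\alpha(v)+\sum_{(v',v)\in Z(D,G)} z_\alpha(v',v)>(s+\Delta_s)/2$. Biased Dissolution: given an undirected graph $G$, positive integers $s,\Delta_s,r_\alpha$ and $\alpha\colon V(G)\to\{0,\dots,s\}$,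 decide whether an $r_\alpha$-biased $(s,\Delta_s)$-dissolution for $(G,\alpha)$ exists. *)

(* Defs.v *)
From mathcomp Require Import all_boot.
Set Implicit Arguments. Unset Strict Implicit. Unset Printing Implicit Defensive.

(* Biased dissolution on an undirected graph (V, E), E symmetric,       *)
(* irreflexive.  The functions z, z_alpha are given as total functions  *)
(* V -> V -> nat; only their values on Z(D,G) = {(x,y) | x in D,        *)
(* y notin D, {x,y} in E} matter, and these are bounded by s.           *)
Section Dissolution.
Variables (V : finType) (E : rel V).

Definition inZ (D : {set V}) (x y : V) : bool := [&& x \in D, y \notin D & E x y].

Definition is_dissolution (s ds : nat) (D : {set V}) (z : V -> V -> nat) : Prop :=
  [/\ D \proper [set: V],
      (forall x y, inZ D x y -> z x y <= s),
      (forall x, x \in D -> \sum_(y | inZ D x y) z x y = s) &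
      (forall y, y \notin D -> \sum_(x | inZ D x y) z x y = ds)].

Definition is_biased_dissolution (s ds r : nat) (alpha : V -> nat)
    (D : {set V}) (z za : V -> V -> nat) (R : {set V}) : Prop :=
  [/\ is_dissolution s ds D z,
      (forall x y, inZ D x y -> za x y <= s /\ za x y <= z x y),
      (R \subset ~: D /\ #|R| = r),
      (forall x, x \in D -> \sum_(y | inZ D x y) za x y = alpha x) &
      (* alpha v + sum > (s + ds)/2, stated exactly over the integers *)
      (forall y, y \in R -> s + ds < 2 * (alpha y + \sum_(x | inZ D x y) za x y))].

Definition biased_dissolution_exists (s ds r : nat) (alpha : V -> nat) : Prop :=
  exists D z za R, is_biased_dissolution s ds r alpha D z za R.

End Dissolution.

Definition complete_rel (n : nat) : rel 'I_n := fun x y => x != y.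

(* Unit-cost RAM (random access machine) with unbounded natural-number *)
(* registers; every instruction, including each arithmetic operation,   *)
(* costs one time step ("constant-time arithmetic operations").        *)
Inductive instr : Type :=
| IConst of nat & nat
| IAdd of nat & nat & nat
| ISub of nat & nat & nat      (* ISub d a b   : R[d] := R[a] - R[b] (truncated) *)
| IMul of nat & nat & nat
| IDiv of nat & nat & nat      (* IDiv d a b   : R[d] := R[a] %/ R[b] (0 if R[b]=0) *)
| ILoad of nat & nat
| IStore of nat & nat
| IJz of nat & nat
| IJmp of nat
| IHalt.

Definition memory := nat -> nat.
Definition config := (nat * memory)%type.

Definition upd (m : memory) (a v : nat) : memory :=
  fun x => if x == a then v else m x.

(* a configuration is halted if the pc points to IHalt or outside the program *)
Definition halted (P : seq instr) (c : config) : bool :=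
  match nth IHalt P c.1 with IHalt => true | _ => false end.

Definition step (P : seq instr) (c : config) : config :=
  let: (pc, m) := c in
  match nth IHalt P pc with
  | IConst d k => (pc.+1, upd m d k)
  | IAdd d a b => (pc.+1, upd m d (m a + m b))
  | ISub d a b => (pc.+1, upd m d (m a - m b))
  | IMul d a b => (pc.+1, upd m d (m a * m b))
  | IDiv d a b => (pc.+1, upd m d (m a %/ m b))
  | ILoad d a => (pc.+1, upd m d (m (m a)))
  | IStore a b => (pc.+1, upd m (m a) (m b))
  | IJz a l => (if m a == 0 then l else pc.+1, m)
  | IJmp l => (l, m)
  | IHalt => (pc, m)
  end.

(* run for t steps (halted configurations are fixed points of step) *)
Fixpoint run (P : seq instr) (t : nat) (c : config) : config :=
  if t is t'.+1 then run P t' (step P c) else c.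

(* Input encoding of an instance on the complete graph with vertex set 'I_n:
   R[1] = n, R[2] = s, R[3] = ds, R[4] = r, R[5 + i] = alpha i (i < n),
   all other registers 0; execution starts at pc = 0. *)
Definition init_config (n s ds r : nat) (alpha : 'I_n -> nat) : config :=
  (0, fun x =>
        if x == 1 then n else if x == 2 then s else if x == 3 then ds
        else if x == 4 then r
        else if (5 <= x) && (x < 5 + n) then
          (if insub (x - 5) is Some i then alpha i else 0)
        else 0).

Definition output (c : config) : nat := c.2 0.

(* Main.v *)
Require Import Defs.
From mathcomp Require Import all_boot zify.
Set Implicit Arguments. Unset Strict Implicit. Unset Printing Implicit Defensive.

Definition before (A : nat -> nat) (u v : nat) : bool :=
  (A v < A u) || ((A u == A v) && (u < v)).
Definition rank n A v := \sum_(0 <= u < n) before A u v.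
Definition cntP n (A : nat -> nat) (P : nat -> bool) := \sum_(0 <= u < n) P (A u).

Lemma cnt_lt n c : \sum_(0 <= i < n) (i < c) = minn c n.
Proof. elim: n => [|n IH]; first by rewrite big_geq //; lia.
rewrite big_nat_recr //= IH; lia. Qed.

Lemma cnt_eq n v : \sum_(0 <= i < n) (i == v) = (v < n).
Proof. elim: n => [|n IH]; first by rewrite big_geq.
rewrite big_nat_recr //= IH; lia. Qed.

Lemma cnt_int n a b : \sum_(0 <= i < n) (a <= i < b) = minn b n - minn a n.
Proof. elim: n => [|n IH]; first by rewrite big_geq //; lia.
rewrite big_nat_recr //= IH; lia. Qed.

Lemma sum_len n (f g : nat -> nat) : (forall i, i < n -> f i <= g i) ->
  \sum_(0 <= i < n) f i <= \sum_(0 <= i < n) g i.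
Proof. move=> H; rewrite !big_mkord; apply: leq_sum => i _; exact: H. Qed.

Lemma sum_eqn n (f g : nat -> nat) : (forall i, i < n -> f i = g i) ->
  \sum_(0 <= i < n) f i = \sum_(0 <= i < n) g i.
Proof. move=> H; rewrite !big_mkord; apply: eq_bigr => i _; exact: H. Qed.

Lemma sumDn n (f g : nat -> nat) :
  \sum_(0 <= i < n) (f i + g i) = \sum_(0 <= i < n) f i + \sum_(0 <= i < n) g i.
Proof. by rewrite big_split. Qed.

Lemma sumBn n (f g : nat -> nat) : (forall i, i < n -> g i <= f i) ->
  \sum_(0 <= i < n) (f i - g i) = \sum_(0 <= i < n) f i - \sum_(0 <= i < n) g i.
Proof. move=> H.
have -> : \sum_(0 <= i < n) f i = \sum_(0 <= i < n) ((f i - g i) + g i).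
  by apply: sum_eqn => i hi; rewrite subnK // H.
by rewrite sumDn addnK. Qed.

Lemma sum_constMn n c (f : nat -> nat) :
  \sum_(0 <= i < n) (c * f i) = c * \sum_(0 <= i < n) f i.
Proof. by rewrite big_distrr. Qed.

Lemma before_irr A v : before A v v = false.
Proof. rewrite /before; lia. Qed.

Lemma before_trans A u v w : before A u v -> before A v w -> before A u w.
Proof. rewrite /before; lia. Qed.

Lemma before_total A u v : u != v -> before A u v || before A v u.
Proof. rewrite /before; lia. Qed.

Lemma rank_prefix n A (P : pred nat) (HP : forall a b, a <= b -> P a -> P b) v :
  v < n -> P (A v) = (rank n A v < cntP n A P).
Proof.
move=> hv; case Pv: (P (A v)); apply/esym.
- rewrite /rank /cntP.
  have : \sum_(0 <= u < n) (before A u v + (u == v)) <= \sum_(0 <= u < n) P (A u).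
    apply: sum_len => u hu; case: eqP => [->|neq]; first by rewrite before_irr Pv.
    rewrite addn0; case b: (before A u v) => //=.
    by rewrite (HP (A v) (A u)) //; move: b; rewrite /before; lia.
  by rewrite sumDn cnt_eq hv addn1.
- apply/negbTE; rewrite -leqNgt /rank /cntP; apply: sum_len => u hu.
  case Pu: (P (A u)) => //=.
  have : A v < A u.
    rewrite ltnNge; apply/negP => le; move: (HP _ _ le Pu); by rewrite Pv.
  by rewrite /before => ->.
Qed.

Lemma rank_lt n A v : v < n -> rank n A v < n.
Proof.
move=> hv; have := rank_prefix (P := fun _ => true) A (fun _ _ _ _ => erefl) hv.
rewrite /cntP.
have -> : \sum_(0 <= u < n) true = n.
  by rewrite -[RHS](minnn n) -(cnt_lt n n); apply: sum_eqn => i ->.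
by move=> <-.
Qed.

Lemma rank_mono n A u v : u < n -> v < n -> before A u v -> rank n A u < rank n A v.
Proof.
move=> hu hv b; rewrite /rank.
have : \sum_(0 <= w < n) (before A w u + (w == u)) <= \sum_(0 <= w < n) before A w v.
  apply: sum_len => w hw; case: eqP => [->|neq]; first by rewrite before_irr b.
  rewrite addn0; case b2: (before A w u) => //=.
  by rewrite (before_trans b2 b).
by rewrite sumDn cnt_eq hu addn1.
Qed.

Lemma rank_inj n A u v : u < n -> v < n -> rank n A u = rank n A v -> u = v.
Proof.
move=> hu hv e; apply/eqP; apply/negPn/negP => neq.
case/orP: (before_total A neq) => b.
- by move: (rank_mono hu hv b); rewrite e ltnn.
- by move: (rank_mono hv hu b); rewrite e ltnn.
Qed.

Lemma rank_reindex n A (F : nat -> nat) :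
  \sum_(0 <= v < n) F (rank n A v) = \sum_(0 <= i < n) F i.
Proof.
rewrite !big_mkord.
pose h (v : 'I_n) : 'I_n := Ordinal (rank_lt A (ltn_ord v)).
have hi : injective h.
  move=> x y /(congr1 val) /= e; apply: val_inj; exact: rank_inj (ltn_ord x) (ltn_ord y) e.
by rewrite [RHS](reindex_inj hi).
Qed.

Definition TT s ds := (s + ds) %/ 2 + 1.
Definition LL s ds := TT s ds - ds.
Definition kk n s ds := n * ds %/ (s + ds).
Definition ee n s ds A := cntP n A (fun a => LL s ds <= a).
Definition pp n s ds r A := minn (ee n s ds A) (kk n s ds + r).
Definition qq n s ds r A := pp n s ds r A - r.
Definition inR n s ds r A v :=
  (qq n s ds r A <= rank n A v) && (rank n A v < pp n s ds r A).
Definition inD n s ds r A v := (rank n A v < kk n s ds + r) && ~~ inR n s ds r A v.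
Definition SA n s ds r A := \sum_(0 <= v < n) inD n s ds r A v * A v.
Definition SN n s ds r A := \sum_(0 <= v < n) inR n s ds r A v * (TT s ds - A v).

Definition Phi n s ds A (D R : nat -> bool) :=
  \sum_(0 <= v < n) (D v * A v + R v * minn (A v) (TT s ds)).

Lemma needPhi n s ds A (D R : nat -> bool) r :
  \sum_(0 <= v < n) R v = r ->
  (\sum_(0 <= v < n) R v * (TT s ds - A v) <= \sum_(0 <= v < n) D v * A v)
  = (r * TT s ds <= Phi n s ds A D R).
Proof.
move=> hr; rewrite /Phi sumDn.
have e : \sum_(0 <= v < n) R v * (TT s ds - A v) =
         r * TT s ds - \sum_(0 <= v < n) R v * minn (A v) (TT s ds).
  have -> : r * TT s ds = \sum_(0 <= v < n) R v * TT s ds by rewrite -hr big_distrl.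
  rewrite -sumBn; last by move=> i _; case: (R i); lia.
  apply: sum_eqn => i _; case: (R i); lia.

by rewrite e leq_subLR addnC.
Qed.

Lemma layer n s ds A (D R : nat -> bool) : (forall v, v < n -> A v <= s) ->
  Phi n s ds A D R = \sum_(0 <= t < s) \sum_(0 <= v < n)
     (D v * (t < A v) + R v * ((t < A v) && (t < TT s ds))).
Proof.
move=> hA; rewrite /Phi exchange_big_nat; apply: sum_eqn => v hv.
rewrite sumDn !sum_constMn; congr (_ * _ + _ * _).
- by rewrite cnt_lt; move: (hA v hv); lia.
- have -> : \sum_(0 <= i < s) ((i < A v) && (i < TT s ds)) = \sum_(0 <= i < s) (i < minn (A v) (TT s ds)).
    by apply: sum_eqn => i _; lia.
  by rewrite cnt_lt; move: (hA v hv); lia.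
Qed.

Lemma sum_bool_le n (f : nat -> bool) : \sum_(0 <= i < n) f i <= n.
Proof. rewrite -{2}(minnn n) -cnt_lt; apply: sum_len => i ->; by case: (f i). Qed.

Lemma opt n s ds r A (Dp Rp : nat -> bool) :
  (forall v, v < n -> A v <= s) ->
  \sum_(0 <= v < n) Dp v = kk n s ds -> \sum_(0 <= v < n) Rp v = r ->
  (forall v, v < n -> ~~ (Dp v && Rp v)) ->
  (forall v, v < n -> Rp v -> LL s ds <= A v) ->
  kk n s ds + r <= n ->
  Phi n s ds A Dp Rp <= Phi n s ds A (inD n s ds r A) (inR n s ds r A).
Proof.
move=> hA hD hR disj elig hkr.
have hre : r <= ee n s ds A.
  rewrite -hR /ee /cntP; apply: sum_len => v hv; move: (elig v hv); case: (Rp v) => //= ->; done.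
rewrite !layer //; apply: sum_len => t ht.
set N := cntP n A (fun a => t < a).
have hN : N <= n by rewrite /N /cntP; apply: sum_bool_le.
have pre : forall v, v < n -> (t < A v) = (rank n A v < N).
  move=> v hv; apply: (@rank_prefix n A (fun a => t < a)) => // a b /=; lia.
have ppq : qq n s ds r A <= pp n s ds r A <= kk n s ds + r.
  rewrite /qq /pp; lia.
case: (ltnP t (TT s ds)) => htT.
-
  have L1 : \sum_(0 <= v < n) (Dp v * (t < A v) + Rp v * ((t < A v) && true))
            <= minn (kk n s ds + r) N.
    rewrite leq_min; apply/andP; split.
    + rewrite -hD -hR -sumDn; apply: sum_len => v hv;  case: (Dp v); case: (Rp v); case: (t < A v) => //.
    + rewrite /N /cntP. apply: sum_len => v hv; move: (disj v hv);  case: (Dp v); case: (Rp v); case: (t < A v) => //.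
  apply: (leq_trans L1).
  have -> : \sum_(0 <= v < n) (inD n s ds r A v * (t < A v) + inR n s ds r A v * ((t < A v) && true))
          = \sum_(0 <= v < n) (rank n A v < minn (kk n s ds + r) N).
    apply: sum_eqn => v hv; rewrite pre // /inD /inR; move: ppq; lia.
  by rewrite (@rank_reindex n A (fun i => i < minn (kk n s ds + r) N)) cnt_lt; lia.
-
  have hNe : N <= ee n s ds A.
    rewrite /N /ee /cntP; apply: sum_len => v hv; rewrite /LL; case: (ltnP t (A v)) => //=; lia.
  have L1 : \sum_(0 <= v < n) (Dp v * (t < A v) + Rp v * ((t < A v) && false))
            <= minn N (qq n s ds r A).
    have e : \sum_(0 <= v < n) (Dp v * (t < A v) + Rp v * ((t < A v) && false))
         = \sum_(0 <= v < n) (Dp v && (t < A v)).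
      apply: sum_eqn => v _; rewrite andbF; case: (Dp v); case: (Rp v); case: (t < A v) => //.
    rewrite e leq_min; apply/andP; split.
    + rewrite /N /cntP; apply: sum_len => v _; case: (Dp v) => //=; by case: (t < A v).
    + have a1 : \sum_(0 <= v < n) (Dp v && (t < A v)) <= kk n s ds.
        rewrite -hD; apply: sum_len => v _; case: (Dp v) => //=; by case: (t < A v).
      have a2 : \sum_(0 <= v < n) (Dp v && (t < A v)) + r <= ee n s ds A.
        rewrite /ee /cntP -hR -sumDn; apply: sum_len => v hv.
        move: (disj v hv) (elig v hv); rewrite /LL; case: (Dp v); case: (Rp v); case: (ltnP t (A v)) => //=; try lia.
      rewrite /qq /pp; lia.
  apply: (leq_trans L1).
  have -> : \sum_(0 <= v < n) (inD n s ds r A v * (t < A v) + inR n s ds r A v * ((t < A v) && false))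
          = \sum_(0 <= v < n) (rank n A v < minn N (qq n s ds r A)).
    apply: sum_eqn => v hv; rewrite andbF pre // /inD /inR.
    move: ppq hNe hre; rewrite /qq /pp; lia.
  by rewrite (@rank_reindex n A (fun i => i < minn N (qq n s ds r A))) cnt_lt; lia.
Qed.

Definition Aof n (alpha : 'I_n -> nat) (i : nat) : nat :=
  if insub i is Some v then alpha v else 0.
Definition ind n (S : {set 'I_n}) (i : nat) : bool :=
  if insub i is Some v then v \in S else false.

Lemma Aof_val n (alpha : 'I_n -> nat) (v : 'I_n) : Aof alpha (val v) = alpha v.
Proof. by rewrite /Aof valK. Qed.
Lemma ind_val n (S : {set 'I_n}) (v : 'I_n) : ind S (val v) = (v \in S).
Proof. by rewrite /ind valK. Qed.

Lemma Aof_le n (alpha : 'I_n -> nat) s : (forall v, alpha v <= s) -> forall i, Aof alpha i <= s.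
Proof. by move=> h i; rewrite /Aof; case: insub. Qed.

Lemma conv n (S : {set 'I_n}) (G : nat -> nat) :
  \sum_(0 <= i < n) ind S i * G i = \sum_(v in S) G (val v).
Proof.
rewrite big_mkord [RHS]big_mkcond; apply: eq_bigr => v _; rewrite ind_val.
by case: (v \in S); rewrite ?mul1n ?mul0n.
Qed.

Lemma conv1 n (S : {set 'I_n}) : \sum_(0 <= i < n) ind S i = #|S|.
Proof.
rewrite -sum1_card -(conv S (fun _ => 1)); apply: sum_eqn => i _; by rewrite muln1.
Qed.

Definition decide n s ds r A :=
  [&& kk n s ds * (s + ds) == n * ds, kk n s ds + r <= n, r <= ee n s ds A &
      SN n s ds r A <= SA n s ds r A].

Lemma inZc n (D : {set 'I_n}) x y :
  inZ (@complete_rel n) D x y = [&& x \in D, y \notin D & x != y].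
Proof. by []. Qed.

Lemma dsum n (D : {set 'I_n}) (F : 'I_n -> 'I_n -> nat) :
  \sum_(x in D) \sum_(y | inZ (@complete_rel n) D x y) F x y =
  \sum_(y in ~: D) \sum_(x | inZ (@complete_rel n) D x y) F x y.
Proof.
have L : \sum_(x in D) \sum_(y | inZ (@complete_rel n) D x y) F x y =
  \sum_x \sum_y (if inZ (@complete_rel n) D x y then F x y else 0).
  rewrite [LHS]big_mkcond; apply: eq_bigr => x _; rewrite big_mkcond.
  case xD: (x \in D) => //; rewrite big1 // => y _; by rewrite inZc xD.
have R : \sum_(y in ~: D) \sum_(x | inZ (@complete_rel n) D x y) F x y =
  \sum_y \sum_x (if inZ (@complete_rel n) D x y then F x y else 0).
  rewrite [LHS]big_mkcond; apply: eq_bigr => y _; rewrite big_mkcond.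
  case yD: (y \in ~: D) => //; rewrite big1 // => x _.
  by rewrite inZc; move: yD; rewrite in_setC => /negbFE ->; rewrite andbF.
by rewrite L R exchange_big.
Qed.

Lemma sum_inR n s ds r A : kk n s ds + r <= n -> r <= ee n s ds A ->
  \sum_(0 <= v < n) inR n s ds r A v = r.
Proof.
move=> h1 h2; rewrite /inR.
rewrite (@rank_reindex n A (fun i => (qq n s ds r A <= i) && (i < pp n s ds r A))).
by rewrite cnt_int /qq /pp; lia.
Qed.

Lemma sum_inD n s ds r A : kk n s ds + r <= n -> r <= ee n s ds A ->
  \sum_(0 <= v < n) inD n s ds r A v = kk n s ds.
Proof.
move=> h1 h2; rewrite /inD /inR.
rewrite (@rank_reindex n A (fun i => (i < kk n s ds + r) && ~~ ((qq n s ds r A <= i) && (i < pp n s ds r A)))).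
have e : \sum_(0 <= i < n) ((i < kk n s ds + r) && ~~ ((qq n s ds r A <= i) && (i < pp n s ds r A)))
   + \sum_(0 <= i < n) ((qq n s ds r A <= i) && (i < pp n s ds r A)) = \sum_(0 <= i < n) (i < kk n s ds + r).
  rewrite -sumDn; apply: sum_eqn => i _; rewrite /qq /pp; lia.
move: e; rewrite cnt_int cnt_lt /qq /pp; lia.
Qed.

Lemma dir1 n s ds r (alpha : 'I_n -> nat) :
  0 < s -> 0 < ds -> 0 < r -> (forall v, alpha v <= s) ->
  biased_dissolution_exists (@complete_rel n) s ds r alpha -> decide n s ds r (Aof alpha).
Proof.
move=> hs hds hr hal [D [z [za [R [[hprop hz hrow hcol] hza [hRsub hRcard] hzarow hRcond]]]]].
set A := Aof alpha.
have hAs : forall i, A i <= s by apply: Aof_le.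
have cC : #|~: D| = n - #|D| by have := cardsC D; rewrite card_ord; lia.
have F1 : #|D| * s = #|~: D| * ds.
  rewrite -!sum_nat_const; transitivity (\sum_(x in D) \sum_(y | inZ (@complete_rel n) D x y) z x y).
    by apply/esym/eq_bigr => x xD; apply: hrow.
  rewrite dsum; apply: eq_bigr => y; rewrite in_setC; exact: hcol.
have hDn : #|D| <= n by have := max_card D; rewrite card_ord.
have hm : #|D| * ds <= n * ds := leq_mul hDn (leqnn ds).
have E : n * ds = #|D| * (s + ds) by move: F1; rewrite cC mulnBl mulnDr; lia.
have hk : kk n s ds = #|D| by rewrite /kk E mulnK // addn_gt0 hs.
have chk1 : kk n s ds * (s + ds) == n * ds by rewrite hk E.
have hRc : #|R| <= #|~: D| by apply: subset_leq_card.
have chk2 : kk n s ds + r <= n by rewrite hk -hRcard; move: hRc; rewrite cC; lia.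
set c := fun y => \sum_(x | inZ (@complete_rel n) D x y) za x y.
have hc : forall y, y \notin D -> c y <= ds.
  move=> y yD; rewrite -(hcol y yD); apply: leq_sum => x hx; exact: (hza x y hx).2.
have RD : forall y, y \in R -> y \notin D.
  move=> y yR; have := subsetP hRsub y yR; by rewrite in_setC.
have hneed : forall y, y \in R -> TT s ds - alpha y <= c y.
  move=> y yR; have := hRcond y yR; rewrite /TT /c; lia.
have helig : forall y, y \in R -> LL s ds <= alpha y.
  move=> y yR; have := hneed y yR; have := hc y (RD y yR); rewrite /LL; lia.
have F5 : \sum_(y in R) (TT s ds - alpha y) <= \sum_(x in D) alpha x.
  apply: (@leq_trans (\sum_(y in R) c y)); first by apply: leq_sum => y yR; exact: hneed.
  apply: (@leq_trans (\sum_(y in ~: D) c y)).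
    rewrite [X in X <= _]big_mkcond [X in _ <= X]big_mkcond; apply: leq_sum => y _.
    case yR: (y \in R) => //; by rewrite in_setC (RD y yR).
  rewrite /c -dsum; apply: eq_leq; apply: eq_bigr => x xD; exact: hzarow.
have chk3 : r <= ee n s ds A.
  rewrite -hRcard -conv1 /ee /cntP; apply: sum_len => i hi.
  rewrite /ind; case: insubP => // v _ <-; case vR: (v \in R) => //=.
  by rewrite /A Aof_val (helig v vR).
have hDsum : \sum_(0 <= i < n) ind D i = kk n s ds by rewrite conv1 hk.
have hRsum : \sum_(0 <= i < n) ind R i = r by rewrite conv1 hRcard.
have need1 : \sum_(0 <= i < n) ind R i * (TT s ds - A i) <= \sum_(0 <= i < n) ind D i * A i.
  rewrite !conv; under eq_bigr => v _ do rewrite /A Aof_val.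
  by under [X in _ <= X]eq_bigr => v _ do rewrite /A Aof_val.
have P1 := @needPhi n s ds A (ind D) (ind R) r hRsum.
rewrite /= in P1; rewrite need1 in P1.
have Popt := @opt n s ds r A (ind D) (ind R) (fun v _ => hAs v) hDsum hRsum.
have P2 : Phi n s ds A (ind D) (ind R) <= Phi n s ds A (inD n s ds r A) (inR n s ds r A).
  apply: Popt => //.
  - move=> i hi; rewrite /ind; case: insubP => // v _ _; apply/negP => /andP [a b].
    by move: (RD v b); rewrite a.
  - move=> i hi; rewrite /ind; case: insubP => // v _ <- vR; by rewrite /A Aof_val helig.
rewrite /decide chk1 chk2 chk3 /=.
rewrite /SN /SA (@needPhi n s ds A (inD n s ds r A) (inR n s ds r A) r (sum_inR chk2 chk3)).
move: P1 P2; lia.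
Qed.

Definition ov a b c d := minn b d - maxn a c.
Definition pre (w : nat -> nat) j := \sum_(0 <= i < j) w i.
Definition Mx (rw cw : nat -> nat) (x y : nat) :=
  ov (pre rw x) (pre rw x + rw x) (pre cw y) (pre cw y + cw y).

Lemma preS w j : pre w j.+1 = pre w j + w j.
Proof. by rewrite /pre big_nat_recr. Qed.

Lemma pre_mono w a b : pre w a <= pre w (a + b).
Proof. elim: b => [|b IH]; first by rewrite addn0. by rewrite addnS preS; apply: (leq_trans IH); apply: leq_addr. Qed.

Lemma pre_le w j m : j < m -> pre w j + w j <= pre w m.
Proof. move=> h; rewrite -preS -(subnKC h); exact: pre_mono. Qed.

Lemma ov_sum (w : nat -> nat) a b m : a <= b ->
  \sum_(0 <= j < m) ov a b (pre w j) (pre w j + w j) = ov a b 0 (pre w m).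
Proof.
move=> hab; elim: m => [|m IH]; first by rewrite big_geq // /ov /pre big_geq //; lia.
by rewrite big_nat_recr //= IH preS /ov; lia.
Qed.

Lemma Mrow rw cw n x : x < n -> pre rw n = pre cw n ->
  \sum_(0 <= j < n) Mx rw cw x j = rw x.
Proof.
move=> hx e; rewrite /Mx ov_sum ?leq_addr //; have := pre_le rw hx; rewrite e /ov; lia.
Qed.

Lemma Mcol rw cw n y : y < n -> pre rw n = pre cw n ->
  \sum_(0 <= i < n) Mx rw cw i y = cw y.
Proof.
move=> hy e; rewrite (@sum_eqn n _ (fun i => ov (pre cw y) (pre cw y + cw y) (pre rw i) (pre rw i + rw i))).
  by rewrite ov_sum ?leq_addr //; have := pre_le cw hy; rewrite -e /ov; lia.
by move=> i _; rewrite /Mx /ov; lia.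
Qed.

Lemma Mle_r rw cw x y : Mx rw cw x y <= rw x.
Proof. rewrite /Mx /ov; lia. Qed.
Lemma Mle_c rw cw x y : Mx rw cw x y <= cw y.
Proof. rewrite /Mx /ov; lia. Qed.

Lemma fill_sum (cap : nat -> nat) L m :
  \sum_(0 <= i < m) minn (cap i) (L - pre cap i) = minn L (pre cap m).
Proof.
elim: m => [|m IH]; first by rewrite big_geq // /pre big_geq //; lia.
by rewrite big_nat_recr //= IH preS; lia.
Qed.


Lemma sum_pos n (f : nat -> nat) : 0 < \sum_(0 <= i < n) f i -> exists2 i, i < n & 0 < f i.
Proof.
elim: n => [|n IH]; first by rewrite big_geq.
rewrite big_nat_recr //= addn_gt0 => /orP [/IH [i hi fi]|h].
  by exists i => //; apply: ltnW.
by exists n.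
Qed.

Lemma rowconv n (D : {set 'I_n}) (F : nat -> nat -> nat) (x : 'I_n) :
  x \in D -> (forall y : 'I_n, y \in D -> F x y = 0) ->
  \sum_(y | inZ (@complete_rel n) D x y) F x y = \sum_(0 <= j < n) F x j.
Proof.
move=> hx h0; rewrite big_mkcond big_mkord; apply: eq_bigr => y _; rewrite inZc hx /=.
case yD: (y \in D) => /=; first by rewrite h0.
case: eqP => // e; by move: yD; rewrite -e hx.
Qed.

Lemma colconv n (D : {set 'I_n}) (F : nat -> nat -> nat) (y : 'I_n) :
  y \notin D -> (forall x : 'I_n, x \notin D -> F x y = 0) ->
  \sum_(x | inZ (@complete_rel n) D x y) F x y = \sum_(0 <= i < n) F i y.
Proof.
move=> hy h0; rewrite big_mkcond big_mkord; apply: eq_bigr => x _; rewrite inZc hy /=.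
case xD: (x \in D) => /=; last by rewrite h0 ?xD.
case: eqP => // e; by move: hy; rewrite -e xD.
Qed.

Definition needR n s ds r A i := inR n s ds r A i * (TT s ds - A i).
Definition capc n s ds r A i := (~~ inD n s ds r A i) * (ds - needR n s ds r A i).
Definition fillc n s ds r A i :=
  minn (capc n s ds r A i) ((SA n s ds r A - SN n s ds r A) - pre (capc n s ds r A) i).
Definition colA n s ds r A i := needR n s ds r A i + fillc n s ds r A i.
Definition rowA n s ds r A i := inD n s ds r A i * A i.
Definition rowB n s ds r A i := inD n s ds r A i * (s - A i).
Definition colB n s ds r A i := (~~ inD n s ds r A i) * (ds - colA n s ds r A i).

Lemma ind_setP n (P : nat -> bool) i : i < n -> ind [set v : 'I_n | P (val v)] i = P i.
Proof. move=> hi; rewrite /ind; case: insubP => [v _ <-|]; first by rewrite inE. by rewrite hi. Qed.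

Lemma sum1n n : \sum_(0 <= i < n) 1 = n.
Proof. by rewrite sum_nat_const_nat subn0 muln1. Qed.

Lemma dir2 n s ds r (alpha : 'I_n -> nat) :
  0 < s -> 0 < ds -> 0 < r -> (forall v, alpha v <= s) ->
  decide n s ds r (Aof alpha) -> biased_dissolution_exists (@complete_rel n) s ds r alpha.
Proof.
move=> hs hds hr hal /and4P [/eqP chk1 chk2 chk3 chk4].
pose A := Aof alpha.
have hAs : forall i, A i <= s by apply: Aof_le.
have hD := sum_inD chk2 chk3; have hR := sum_inR chk2 chk3.
rewrite -/A in hD hR chk3 chk4.
have disj : forall i, inR n s ds r A i -> inD n s ds r A i = false.
  by move=> i h; rewrite /inD h andbF.
have elig : forall i, i < n -> inR n s ds r A i -> LL s ds <= A i.
  move=> i hi; rewrite (@rank_prefix n A (fun a => LL s ds <= a)) //; last by move=> a b; lia.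
  rewrite /inR -/(ee n s ds A) /pp; lia.
have needle : forall i, i < n -> needR n s ds r A i <= (~~ inD n s ds r A i) * ds.
  move=> i hi; rewrite /needR; case rIi: (inR n s ds r A i); last by rewrite mul0n.
  rewrite disj //= mul1n; have := elig i hi rIi; rewrite /LL; lia.
have hkn : kk n s ds <= n by lia.
have hks : kk n s ds * s = (n - kk n s ds) * ds.
  by move: chk1; rewrite mulnDr mulnBl; lia.
have snD : \sum_(0 <= i < n) (~~ inD n s ds r A i) = n - kk n s ds.
  have : \sum_(0 <= i < n) (inD n s ds r A i + ~~ inD n s ds r A i) = n.
    by rewrite -[X in _ = X](sum1n n); apply: sum_eqn => i _; case: (inD _ _ _ _ _ i).
  by rewrite sumDn hD; lia.
have SAle : SA n s ds r A <= kk n s ds * s.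
  rewrite -hD big_distrl /=; apply: sum_len => i _; exact: leq_mul.
have pcap : pre (capc n s ds r A) n = (n - kk n s ds) * ds - SN n s ds r A.
  rewrite /pre /capc -snD big_distrl /= /SN -/(needR n s ds r A) -sumBn; last exact: needle.
  by apply: sum_eqn => i hi; have := needle i hi; rewrite /needR; case: (inD _ _ _ _ _ i) => /=; lia.
have pfill : pre (fillc n s ds r A) n = SA n s ds r A - SN n s ds r A.
  by rewrite /pre /fillc fill_sum pcap; lia.
have pA : pre (rowA n s ds r A) n = pre (colA n s ds r A) n.
  rewrite /pre /colA sumDn -/(pre (fillc n s ds r A) n) pfill.
  by rewrite /rowA -/(SA n s ds r A) /needR -/(SN n s ds r A); lia.
have colA0 : forall i, inD n s ds r A i -> colA n s ds r A i = 0.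
  move=> i hi; rewrite /colA /fillc /capc /needR hi /=.
  case rIi: (inR n s ds r A i); first by rewrite disj in hi.
  by rewrite !mul0n add0n min0n.
have colAle : forall i, i < n -> colA n s ds r A i <= ds.
  move=> i hi; rewrite /colA /fillc; have := needle i hi.
  rewrite /capc; case: (inD _ _ _ _ _ i) => /=; lia.
have pB : pre (rowB n s ds r A) n = pre (colB n s ds r A) n.
  have e1 : pre (rowB n s ds r A) n = kk n s ds * s - SA n s ds r A.
    rewrite /pre /rowB -hD big_distrl /= /SA -sumBn; last by move=> i _; case: (inD _ _ _ _ _ i); rewrite ?mul1n ?mul0n //; lia.
    by apply: sum_eqn => i _; case: (inD _ _ _ _ _ i); rewrite ?mul1n ?mul0n //; lia.
  have e2 : pre (colB n s ds r A) n = (n - kk n s ds) * ds - SA n s ds r A.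
    have eA : \sum_(0 <= i < n) (~~ inD n s ds r A i) * colA n s ds r A i = SA n s ds r A.
      transitivity (pre (colA n s ds r A) n); last by rewrite -pA.
      by apply: sum_eqn => i _; case dIi: (inD _ _ _ _ _ i); [rewrite colA0 | rewrite /= mul1n].
    rewrite /pre /colB -snD big_distrl /= -eA -sumBn; last first.
      by move=> i hi; have := colAle i hi; case: (inD _ _ _ _ _ i) => /=; lia.
    by apply: sum_eqn => i hi; have := colAle i hi; case: (inD _ _ _ _ _ i) => /=; lia.
  by rewrite e1 e2 hks.
pose Dset := [set v : 'I_n | inD n s ds r A (val v)].
pose Rset := [set v : 'I_n | inR n s ds r A (val v)].
pose za := fun x y : 'I_n => Mx (rowA n s ds r A) (colA n s ds r A) x y.
pose zb := fun x y : 'I_n => Mx (rowB n s ds r A) (colB n s ds r A) x y.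
have inDs : forall v : 'I_n, (v \in Dset) = inD n s ds r A v by move=> v; rewrite inE.
have inRs : forall v : 'I_n, (v \in Rset) = inR n s ds r A v by move=> v; rewrite inE.
have zaD : forall (x y : 'I_n), y \in Dset -> za x y = 0.
  move=> x y; rewrite inDs => h; apply/eqP; rewrite -leqn0; have := Mle_c (rowA n s ds r A) (colA n s ds r A) x y.
  by rewrite colA0.
have zbD : forall (x y : 'I_n), y \in Dset -> zb x y = 0.
  move=> x y; rewrite inDs => h; apply/eqP; rewrite -leqn0; have := Mle_c (rowB n s ds r A) (colB n s ds r A) x y.
  by rewrite /colB h.
have zaN : forall (x y : 'I_n), x \notin Dset -> za x y = 0.
  move=> x y; rewrite inDs => /negbTE h; apply/eqP; rewrite -leqn0; have := Mle_r (rowA n s ds r A) (colA n s ds r A) x y.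
  by rewrite /rowA h.
have zbN : forall (x y : 'I_n), x \notin Dset -> zb x y = 0.
  move=> x y; rewrite inDs => /negbTE h; apply/eqP; rewrite -leqn0; have := Mle_r (rowB n s ds r A) (colB n s ds r A) x y.
  by rewrite /rowB h.
have Aval : forall v : 'I_n, A v = alpha v by move=> v; exact: Aof_val.
exists Dset, (fun x y => za x y + zb x y), za, Rset; split.
- split.
  + rewrite properT; apply/negP => /eqP HD.
    have [i hi ri] : exists2 i, i < n & 0 < inR n s ds r A i by apply: sum_pos; rewrite hR.
    have : (Ordinal hi) \in Dset by rewrite HD inE.
    by rewrite inDs /= disj //; case: (inR _ _ _ _ _ i) ri.
  + move=> x y; rewrite inZc => /and3P [xD _ _].
    have := Mle_r (rowA n s ds r A) (colA n s ds r A) x y; have := Mle_r (rowB n s ds r A) (colB n s ds r A) x y.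
    rewrite /za /zb /rowA /rowB; have := hAs x; case: (inD _ _ _ _ _ x) => /=; lia.
  + move=> x xD; rewrite (@rowconv n Dset (fun x y => Mx (rowA n s ds r A) (colA n s ds r A) x y + Mx (rowB n s ds r A) (colB n s ds r A) x y)) //; last first.
      by move=> y yD; have := zaD x y yD; have := zbD x y yD; rewrite /za /zb => -> ->.
    rewrite sumDn !Mrow //; move: xD; rewrite inDs /rowA /rowB => ->; have := hAs x; lia.
  + move=> y yD; rewrite (@colconv n Dset (fun x y => Mx (rowA n s ds r A) (colA n s ds r A) x y + Mx (rowB n s ds r A) (colB n s ds r A) x y)) //; last first.
      by move=> x xD; have := zaN x y xD; have := zbN x y xD; rewrite /za /zb => -> ->.
    rewrite sumDn Mcol // Mcol //; move: yD; rewrite inDs /colB => /negbTE ->.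
    by have := colAle y (ltn_ord y); lia.
- move=> x y; rewrite inZc => /and3P [xD _ _]; split; last by apply: leq_addr.
  apply: (leq_trans (Mle_r _ _ _ _)); rewrite /rowA; have := hAs x; case: (inD _ _ _ _ _ x) => /=; lia.
- split.
  + apply/subsetP => v; rewrite inRs in_setC inDs => h; by rewrite disj.
  + rewrite -conv1 -hR; apply: sum_eqn => i hi; by rewrite ind_setP.
- move=> x xD; rewrite (@rowconv n Dset (fun x y => Mx (rowA n s ds r A) (colA n s ds r A) x y)) //; last first.
    by move=> y yD; have := zaD x y yD.
  rewrite Mrow //; move: xD; rewrite inDs /rowA => ->; by rewrite mul1n Aval.
- move=> y yR; have yD : y \notin Dset by rewrite inDs disj // -inRs.
  rewrite (@colconv n Dset (fun x y => Mx (rowA n s ds r A) (colA n s ds r A) x y)) //; last first.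
    by move=> x xD; have := zaN x y xD.
  rewrite Mcol // /colA /needR; move: yR; rewrite inRs => ->; rewrite mul1n -Aval /TT; lia.
Qed.

Definition prog : seq instr := [::
  IConst 0 5 ;
  IAdd 0 0 1 ;
  IStore 0 2 ;
  IConst 2 1 ;
  IAdd 0 0 2 ;
  IStore 0 3 ;
  IAdd 0 0 2 ;
  IStore 0 4 ;
  IConst 2 66 ;
  IAdd 2 2 1 ;
  IConst 3 3 ;
  IAdd 3 3 1 ;
  IJz 3 20 ;
  ILoad 4 0 ;
  IStore 2 4 ;
  IConst 4 1 ;
  ISub 0 0 4 ;
  ISub 2 2 4 ;
  ISub 3 3 4 ;
  IJmp 12 ;
  IConst 18 64 ;
  IAdd 18 18 1 ;
  ILoad 5 18 ;
  IConst 8 1 ;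
  IAdd 18 18 8 ;
  ILoad 6 18 ;
  IAdd 18 18 8 ;
  ILoad 7 18 ;
  IAdd 19 5 6 ;
  IMul 20 1 6 ;
  IDiv 10 20 19 ;
  IMul 21 10 19 ;
  ISub 22 21 20 ;
  ISub 22 8 22 ;
  ISub 23 20 21 ;
  ISub 23 8 23 ;
  IMul 15 22 23 ;
  IAdd 16 10 7 ;
  ISub 22 16 1 ;
  ISub 22 8 22 ;
  IMul 15 15 22 ;
  IConst 22 2 ;
  IDiv 11 19 22 ;
  IAdd 11 11 8 ;
  ISub 12 11 6 ;
  IConst 13 0 ;
  IConst 24 64 ;
  IConst 25 0 ;
  IAdd 25 25 1 ;
  IJz 25 57 ;
  ILoad 26 24 ;
  ISub 27 12 26 ;
  ISub 27 8 27 ;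
  IAdd 13 13 27 ;
  IAdd 24 24 8 ;
  ISub 25 25 8 ;
  IJmp 49 ;
  ISub 22 7 13 ;
  ISub 22 8 22 ;
  IMul 15 15 22 ;
  ISub 22 13 16 ;
  ISub 14 13 22 ;
  ISub 17 14 7 ;
  IConst 28 0 ;
  IConst 29 0 ;
  IConst 30 0 ;
  IConst 31 64 ;
  IConst 32 0 ;
  IAdd 32 32 1 ;
  IJz 32 116 ;
  ILoad 33 31 ;
  IConst 34 0 ;
  IConst 35 0 ;
  IConst 36 64 ;
  IConst 37 0 ;
  IAdd 37 37 1 ;
  IJz 37 96 ;
  ILoad 39 36 ;
  IAdd 40 33 8 ;
  ISub 40 40 39 ;
  ISub 40 8 40 ;
  ISub 41 39 33 ;
  ISub 41 8 41 ;
  ISub 42 33 39 ;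
  ISub 42 8 42 ;
  IMul 41 41 42 ;
  IAdd 42 35 8 ;
  ISub 42 42 30 ;
  ISub 42 8 42 ;
  IMul 41 41 42 ;
  IAdd 40 40 41 ;
  IAdd 34 34 40 ;
  IAdd 35 35 8 ;
  IAdd 36 36 8 ;
  ISub 37 37 8 ;
  IJmp 76 ;
  ISub 43 17 34 ;
  ISub 43 8 43 ;
  IAdd 44 34 8 ;
  ISub 44 44 14 ;
  ISub 44 8 44 ;
  IMul 43 43 44 ;
  IAdd 44 34 8 ;
  ISub 44 44 16 ;
  ISub 44 8 44 ;
  ISub 45 8 43 ;
  IMul 44 44 45 ;
  IMul 45 33 44 ;
  IAdd 28 28 45 ;
  ISub 45 11 33 ;
  IMul 45 45 43 ;
  IAdd 29 29 45 ;
  IAdd 30 30 8 ;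
  IAdd 31 31 8 ;
  ISub 32 32 8 ;
  IJmp 69 ;
  ISub 22 29 28 ;
  ISub 22 8 22 ;
  IMul 15 15 22 ;
  IConst 0 0 ;
  IAdd 0 0 15 ;
  IHalt
].

Arguments run : simpl never.

Lemma runS P t c : run P t.+1 c = run P t (step P c).
Proof. by rewrite /run. Qed.

Lemma run_add P a b c : run P (a + b) c = run P b (run P a c).
Proof. by elim: a c => // a IH c; rewrite addSn !runS IH. Qed.

Lemma run0 P c : run P 0 c = c.
Proof. by []. Qed.

Lemma upd_eq m a v x : x = a -> upd m a v x = v.
Proof. by move=> ->; rewrite /upd eqxx. Qed.
Lemma upd_neq m a v x : x <> a -> upd m a v x = m x.
Proof. by move=> h; rewrite /upd; case: eqP. Qed.

Ltac usimp := repeat match goal with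
  |- context [upd ?m ?a ?v ?x] =>
     first [rewrite (@upd_eq m a v x); last by lia | rewrite (@upd_neq m a v x); last by lia] end.

Lemma run_seq P a b c c' c'' : run P a c = c' -> run P b c' = c'' -> run P (a + b) c = c''.
Proof. by move=> h1 h2; rewrite run_add h1 h2. Qed.

Lemma if_eqT (T : Type) (x y : nat) (a b : T) : x = y -> (if x == y then a else b) = a.
Proof. by move=> ->; rewrite eqxx. Qed.
Lemma if_eqF (T : Type) (x y : nat) (a b : T) : x <> y -> (if x == y then a else b) = b.
Proof. by move=> h; case: eqP. Qed.
Ltac isimp := repeat match goal with
  |- context [if ?x == ?y then _ else _] =>
     first [rewrite (@if_eqT _ x y); last by lia | rewrite (@if_eqF _ x y); last by lia] end.
Ltac msimp := repeat progress (simpl; isimp).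

Lemma jz_no (k : nat) T (a b : T) : k != 0 -> (if k == 0 then a else b) = b.
Proof. by move/negbTE => ->. Qed.

Arguments upd m a v x /.
Arguments divn : simpl never.
Ltac step1 := rewrite runS /step /=.

Lemma jz_cont P pc m a l k : nth IHalt P pc = IJz a l -> m a = k.+1 -> step P (pc, m) = (pc.+1, m).
Proof. by move=> hI ha; rewrite /step hI ha. Qed.
Lemma jz_exit P pc m a l : nth IHalt P pc = IJz a l -> m a = 0 -> step P (pc, m) = (l, m).
Proof. by move=> hI ha; rewrite /step hI ha. Qed.
Ltac stepall := repeat step1; rewrite run0.



Lemma loop_gen (P : seq instr) (H X K N : nat) (Inv : nat -> memory -> Prop) (Post : memory -> Prop) :
  (forall j m, j < N -> Inv j m -> exists m', run P K (H, m) = (H, m') /\ Inv j.+1 m') ->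
  (forall m, Inv N m -> run P 1 (H, m) = (X, m) /\ Post m) ->
  forall m, Inv 0 m -> exists m', run P (N * K + 1) (H, m) = (X, m') /\ Post m'.
Proof.
move=> hit hex.
suff : forall d j m, j + d = N -> Inv j m -> exists m', run P (d * K + 1) (H, m) = (X, m') /\ Post m'.
  by move=> S m hm; apply: (S N 0 m).
elim=> [|d IH] j m hj hm.
  rewrite addn0 in hj; subst j; have [e p] := hex m hm; by exists m.
have [m1 [e1 h1]] := hit j m (ltac:(lia)) hm.
have [m2 [e2 h2]] := IH j.+1 m1 (ltac:(lia)) h1.
by exists m2; rewrite mulSn -addnA run_add e1 e2.
Qed.

Section Copy.
End Copy.

Definition Bk n s ds r (A : nat -> nat) i :=
  if i < n then A i else if i == n then s else if i == n.+1 then ds else r.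

Definition InvC n s ds r A j (m : memory) :=
  m 1 = n /\ m 3 = n + 3 - j /\ m 0 = 7 + n - j /\ m 2 = 66 + n - j /\
    (forall i, i < n + 3 - j -> m (5 + i) = Bk n s ds r A i) /\
    (forall i, n + 3 - j <= i < n + 3 -> m (64 + i) = Bk n s ds r A i).

Lemma copy_it n s ds r A j m : j < n + 3 -> InvC n s ds r A j m ->
  exists m', run prog 8 (12, m) = (12, m') /\ InvC n s ds r A j.+1 m'.
Proof.
move=> hj [h1 [h3 [h0 [h2 [hs ht]]]]]; eexists; split.
  rewrite runS (@jz_cont prog 12 m 3 20 (n + 2 - j)); [|by []|by rewrite h3; lia].
  stepall; reflexivity.
split; [|split; [|split; [|split; [|split]]]].
- by msimp.
- msimp; rewrite h3; lia.
- msimp; rewrite h0; lia.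
- msimp; rewrite h2; lia.
- move=> i hi; msimp; apply: hs; lia.
- move=> i hi; case: (i =P n + 2 - j) => [->|ne]; msimp.
  + rewrite h0 (_ : 7 + n - j = 5 + (n + 2 - j)); last by lia.
    apply: hs; lia.
  + apply: ht; lia.
Qed.

Lemma copy_exit n s ds r A m : InvC n s ds r A (n + 3) m ->
  run prog 1 (12, m) = (20, m) /\ m 1 = n /\ (forall i, i < n + 3 -> m (64 + i) = Bk n s ds r A i).
Proof.
move=> [h1 [h3 [h0 [h2 [hs ht]]]]]; split; last split => //.
  by rewrite runS /step /= h3 subnn.
by move=> i hi; apply: ht; lia.
Qed.

Definition Fr n (A : nat -> nat) (m : memory) := forall i, i < n -> m (64 + i) = A i.

Definition G n s ds r A f (m : memory) :=
  m 1 = n /\ m 5 = s /\ m 6 = ds /\ m 7 = r /\ m 8 = 1 /\ m 10 = kk n s ds /\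
  m 11 = TT s ds /\ m 12 = LL s ds /\ m 15 = f /\ m 16 = kk n s ds + r /\ Fr n A m.

Lemma G_upd n s ds r A f m d v : d \notin [:: 1;5;6;7;8;10;11;12;15;16] -> d < 64 ->
  G n s ds r A f m -> G n s ds r A f (upd m d v).
Proof.
rewrite !inE => hd h64 [h1 [h5 [h6 [h7 [h8 [h10 [h11 [h12 [h15 [h16 hF]]]]]]]]]].
repeat split; usimp => //.
move=> i hi; usimp; exact: hF.
Qed.

Definition f1 n s ds r :=
  (1 - (kk n s ds * (s + ds) - n * ds)) * (1 - (n * ds - kk n s ds * (s + ds))) * (1 - (kk n s ds + r - n)).


Lemma Bk_s n s ds r A : Bk n s ds r A n = s.
Proof. by rewrite /Bk ltnn eqxx. Qed.
Lemma Bk_ds n s ds r A : Bk n s ds r A n.+1 = ds.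
Proof. by rewrite /Bk ltnNge leqnSn /= eqn_leq ltnn /= eqxx. Qed.
Lemma Bk_r n s ds r A : Bk n s ds r A n.+2 = r.
Proof. rewrite /Bk ifF; last lia. rewrite ifF; last lia. rewrite ifF //; lia. Qed.
Lemma Bk_A n s ds r A i : i < n -> Bk n s ds r A i = A i.
Proof. by rewrite /Bk => ->. Qed.

Lemma seg1 n s ds r A m : m 1 = n -> (forall i, i < n + 3 -> m (64 + i) = Bk n s ds r A i) ->
  exists m', run prog 29 (20, m) = (49, m') /\ G n s ds r A (f1 n s ds r) m' /\
    m' 13 = 0 /\ m' 24 = 64 /\ m' 25 = n.
Proof.
move=> h1 hb; eexists; split; first by stepall; reflexivity.
have bs : m (64 + n) = s by rewrite hb ?Bk_s //; lia.
have bds : m (64 + n + 1) = ds by rewrite (_ : 64 + n + 1 = 64 + n.+1); [rewrite hb ?Bk_ds //; lia | lia].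
have br : m (64 + n + 1 + 1) = r by rewrite (_ : 64 + n + 1 + 1 = 64 + n.+2); [rewrite hb ?Bk_r //; lia | lia].
rewrite /G /Fr; repeat split; simpl; rewrite ?h1 ?bs ?bds ?br //.
move=> i hi; rewrite hb ?Bk_A //; lia.
Qed.

Lemma seg0 n s ds r A m : m 1 = n -> m 2 = s -> m 3 = ds -> m 4 = r ->
  (forall i, i < n -> m (5 + i) = A i) ->
  exists m', run prog 12 (0, m) = (12, m') /\ InvC n s ds r A 0 m'.
Proof.
move=> h1 h2 h3 h4 ha; eexists; split; first by stepall; reflexivity.
rewrite /InvC subn0; split; [|split; [|split; [|split; [|split]]]].
- by msimp.
- by msimp; rewrite h1; lia.
- by msimp; rewrite h1; lia.
- by msimp; rewrite h1; lia.
- move=> i hi; rewrite h1.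
  have : i < n \/ i = n \/ i = n.+1 \/ i = n.+2 by lia.
  case=> [hin|[->|[->|->]]]; msimp; rewrite ?Bk_s ?Bk_ds ?Bk_r ?Bk_A ?ha //.
- move=> i; lia.
Qed.

Lemma le1 x y : 1 - (x - y) = (x <= y). Proof. case: leqP; lia. Qed.
Lemma lt1 x y : 1 - (x + 1 - y) = (x < y). Proof. case: ltnP; lia. Qed.
Lemma bmul (a b : bool) : a * b = (a && b). Proof. by case: a; case: b. Qed.

Definition InvE n s ds r A f j (m : memory) :=
  G n s ds r A f m /\ m 13 = \sum_(0 <= u < j) (LL s ds <= A u) /\ m 24 = 64 + j /\ m 25 = n - j.

Ltac Gup := repeat (apply: G_upd; [by []|by []|]).

Lemma eloop_it n s ds r A f j m : j < n -> InvE n s ds r A f j m ->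
  exists m', run prog 8 (49, m) = (49, m') /\ InvE n s ds r A f j.+1 m'.
Proof.
move=> hj [hG [h13 [h24 h25]]]; eexists; split.
  rewrite runS (@jz_cont prog 49 m 25 57 (n - j.+1)); [|by []|by rewrite h25; lia].
  stepall; reflexivity.
have hG' := hG; case: hG' => [h1 [_ [_ [_ [h8 [_ [_ [h12 [_ [_ hF]]]]]]]]]].
split; first by Gup.
simpl; rewrite h13 h24 h25 h8 h12 hF // le1 big_nat_recr //=; split => //; split; lia.
Qed.

Lemma eloop n s ds r A f m : InvE n s ds r A f 0 m ->
  exists m', run prog (n * 8 + 1) (49, m) = (57, m') /\ G n s ds r A f m' /\ m' 13 = ee n s ds A.
Proof.
apply: (@loop_gen prog 49 57 8 n (InvE n s ds r A f)).
- by move=> j m0 hj h; apply: eloop_it.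
- move=> m0 [hG [h13 [h24 h25]]]; split; last by split.
  by rewrite runS (@jz_exit prog 49 m0 25 57) //; rewrite h25 subnn.
Qed.

Definition f2 n s ds r A := f1 n s ds r * (1 - (r - ee n s ds A)).

Definition OB n s ds r A vv sa sn (m : memory) :=
  G n s ds r A (f2 n s ds r A) m /\
  (m 13 = ee n s ds A /\ m 14 = pp n s ds r A /\ m 17 = qq n s ds r A /\ m 28 = sa /\ m 29 = sn /\
   m 30 = vv /\ m 31 = 64 + vv /\ m 32 = n - vv).

Lemma OB_upd n s ds r A vv sa sn m d v :
  d \notin [:: 1;5;6;7;8;10;11;12;15;16] -> d \notin [:: 13;14;17;28;29;30;31;32] -> d < 64 ->
  OB n s ds r A vv sa sn m -> OB n s ds r A vv sa sn (upd m d v).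
Proof.
move=> hd1 hd h64 [hG [h13 [h14 [h17 [h28 [h29 [h30 [h31 h32]]]]]]]]; split.
  by apply: G_upd.
move: hd; rewrite !inE => hd.
by repeat split; usimp.
Qed.

Ltac OBup := repeat (apply: OB_upd; [by []|by []|by []|]).

Lemma seg2 n s ds r A m : G n s ds r A (f1 n s ds r) m -> m 13 = ee n s ds A ->
  exists m', run prog 12 (57, m) = (69, m') /\ OB n s ds r A 0 0 0 m'.
Proof.
move=> hG h13; eexists; split; first by stepall; reflexivity.
have hG' := hG; case: hG' => [h1 [_ [_ [h7 [h8 [_ [_ [_ [h15 [h16 hF]]]]]]]]]].
split.
  rewrite /G /Fr; simpl; rewrite h1 h7 h8 h13 h15 le1; case: hG => [? [? [? [? [? [? [? [? [? [? ?]]]]]]]]]].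
  by repeat split => //; rewrite /f2 le1.
simpl; rewrite h13 h16 h7 h1 /qq /pp minnE; repeat split => //; lia.
Qed.

Definition InvI n s ds r A v sa sn uu (m : memory) :=
  OB n s ds r A v sa sn m /\ m 33 = A v /\ m 34 = \sum_(0 <= u < uu) before A u v /\
  m 35 = uu /\ m 36 = 64 + uu /\ m 37 = n - uu.

Lemma before_val (au av u v : nat) :
  (av < au) + ((au <= av) && (av <= au)) * (u < v) = ((av < au) || ((au == av) && (u < v))).
Proof. case: (ltngtP au av) => h; case: (u < v) => //=; lia. Qed.

Lemma inner_it n s ds r A v sa sn uu m : uu < n -> InvI n s ds r A v sa sn uu m ->
  exists m', run prog 20 (76, m) = (76, m') /\ InvI n s ds r A v sa sn uu.+1 m'.
Proof.
move=> hu [hO [h33 [h34 [h35 [h36 h37]]]]]; eexists; split.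
  rewrite runS (@jz_cont prog 76 m 37 96 (n - uu.+1)); [|by []|by rewrite h37; lia].
  stepall; reflexivity.
have hO' := hO; case: hO' => [[h1 [_ [_ [_ [h8 [_ [_ [_ [_ [_ hF]]]]]]]]]] [_ [_ [_ [_ [_ [h30 _]]]]]]].
split; first by OBup.
simpl; rewrite h33 h34 h35 h36 h37 h8 h30 hF //.
rewrite (lt1 (A v) (A uu)) (le1 (A uu) (A v)) (le1 (A v) (A uu)) (lt1 uu v) bmul before_val big_nat_recr //=; repeat split => //; lia.
Qed.

Lemma inner n s ds r A v sa sn m : InvI n s ds r A v sa sn 0 m ->
  exists m', run prog (n * 20 + 1) (76, m) = (96, m') /\
    OB n s ds r A v sa sn m' /\ m' 33 = A v /\ m' 34 = rank n A v.
Proof.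
apply: (@loop_gen prog 76 96 20 n (InvI n s ds r A v sa sn)).
- by move=> j m0 hj h; apply: inner_it.
- move=> m0 [hO [h33 [h34 [h35 [h36 h37]]]]]; split; last by split.
  by rewrite runS (@jz_exit prog 76 m0 37 96) //; rewrite h37 subnn.
Qed.

Lemma notb1 (b : bool) : 1 - b = ~~ b. Proof. by case: b. Qed.

Definition SAp n s ds r A vv := \sum_(0 <= v < vv) inD n s ds r A v * A v.
Definition SNp n s ds r A vv := \sum_(0 <= v < vv) inR n s ds r A v * (TT s ds - A v).
Definition InvO n s ds r A vv m := OB n s ds r A vv (SAp n s ds r A vv) (SNp n s ds r A vv) m.

Lemma outerA n s ds r A vv m : vv < n -> InvO n s ds r A vv m ->
  exists m', run prog 7 (69, m) = (76, m') /\
     InvI n s ds r A vv (SAp n s ds r A vv) (SNp n s ds r A vv) 0 m'.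
Proof.
move=> hv hO; have hO' := hO; case: hO' => [[h1 [_ [_ [_ [h8 [_ [_ [_ [_ [_ hF]]]]]]]]]] [_ [_ [_ [_ [_ [h30 [h31 h32]]]]]]]].
eexists; split.
  rewrite runS (@jz_cont prog 69 m 32 116 (n - vv.+1)); [|by []|by rewrite h32; lia].
  stepall; reflexivity.
split; first by OBup.
repeat split; simpl => //; rewrite ?h31 ?h1 ?big_geq //; [exact: hF | lia].
Qed.

Lemma outerC n s ds r A vv m : vv < n ->
  OB n s ds r A vv (SAp n s ds r A vv) (SNp n s ds r A vv) m -> m 33 = A vv -> m 34 = rank n A vv ->
  exists m', run prog 20 (96, m) = (69, m') /\ InvO n s ds r A vv.+1 m'.
Proof.
move=> hv hO h33 h34.
have hO' := hO; case: hO' => [[h1 [_ [_ [_ [h8 [_ [h11 [_ [_ [h16 hF]]]]]]]]]] [h13 [h14 [h17 [h28 [h29 [h30 [h31 h32]]]]]]]].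
eexists; split; first by stepall; reflexivity.
split.
  case: hO => [hG _]; by Gup.
repeat split; simpl; rewrite ?h8 ?h11 ?h13 ?h14 ?h16 ?h17 ?h28 ?h29 ?h30 ?h31 ?h32 ?h33 ?h34 //; try lia.
- rewrite (le1 (qq n s ds r A)) (lt1 (rank n A vv) (pp n s ds r A)) bmul notb1.
  by rewrite (lt1 (rank n A vv) (kk n s ds + r)) bmul /SAp big_nat_recr //= mulnC.
- rewrite (le1 (qq n s ds r A)) (lt1 (rank n A vv) (pp n s ds r A)) bmul.
  by rewrite /SNp big_nat_recr //= mulnC.
Qed.

Lemma outer_it n s ds r A vv m : vv < n -> InvO n s ds r A vv m ->
  exists m', run prog (7 + (n * 20 + 1) + 20) (69, m) = (69, m') /\ InvO n s ds r A vv.+1 m'.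
Proof.
move=> hv hO.
have [m1 [e1 h1]] := outerA hv hO.
have [m2 [e2 [h2 [h33 h34]]]] := inner h1.
have [m3 [e3 h3]] := outerC hv h2 h33 h34.
exists m3; split; last exact: h3. apply: (run_seq _ e3); exact: (run_seq e1 e2).
Qed.

Lemma outer n s ds r A m : InvO n s ds r A 0 m ->
  exists m', run prog (n * (7 + (n * 20 + 1) + 20) + 1) (69, m) = (116, m') /\
    OB n s ds r A n (SA n s ds r A) (SN n s ds r A) m'.
Proof.
apply: (@loop_gen prog 69 116 _ n (InvO n s ds r A)).
- by move=> j m0 hj h; apply: outer_it.
- move=> m0 hO; split; last exact: hO.
  case: hO => [_ [_ [_ [_ [_ [_ [_ [_ h32]]]]]]]].
  by rewrite runS (@jz_exit prog 69 m0 32 116) //; rewrite h32 subnn.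
Qed.

Lemma segF n s ds r A sa sn m : OB n s ds r A n sa sn m ->
  exists m', run prog 5 (116, m) = (121, m') /\ m' 0 = f2 n s ds r A * (sn <= sa).
Proof.
move=> [[_ [_ [_ [_ [h8 [_ [_ [_ [h15 _]]]]]]]]] [_ [_ [_ [h28 [h29 _]]]]]].
eexists; split; first by stepall; reflexivity.
by simpl; rewrite h8 h15 h28 h29 le1.
Qed.

Definition Ttot n := 12 + ((n + 3) * 8 + 1) + 29 + (n * 8 + 1) + 12 +
  (n * (7 + (n * 20 + 1) + 20) + 1) + 5.

Lemma whole n s ds r A m : m 1 = n -> m 2 = s -> m 3 = ds -> m 4 = r ->
  (forall i, i < n -> m (5 + i) = A i) ->
  exists m', run prog (Ttot n) (0, m) = (121, m') /\
    m' 0 = f2 n s ds r A * (SN n s ds r A <= SA n s ds r A).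
Proof.
move=> h1 h2 h3 h4 ha.
have [m1 [e1 i1]] := seg0 h1 h2 h3 h4 ha.
have [m2 [e2 [p1 p2]]] : exists m2, run prog ((n + 3) * 8 + 1) (12, m1) = (20, m2) /\
    m2 1 = n /\ (forall i, i < n + 3 -> m2 (64 + i) = Bk n s ds r A i).
  have [m2 [e2 P2]] := @loop_gen prog 12 20 8 (n + 3) (InvC n s ds r A)
    (fun m2 => m2 1 = n /\ (forall i, i < n + 3 -> m2 (64 + i) = Bk n s ds r A i))
    (fun j m0 hj h => copy_it hj h) (fun m0 h => copy_exit h) m1 i1.
  by exists m2.
have [m3 [e3 [g3 [h13 [h24 h25]]]]] := seg1 p1 p2.
have i3 : InvE n s ds r A (f1 n s ds r) 0 m3.
  rewrite /InvE big_geq; last by [].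
  by rewrite addn0 subn0; split; [exact: g3 | split; [exact: h13 | split]].
have [m4 [e4 [g4 h4']]] := @eloop n s ds r A (f1 n s ds r) m3 i3.
have [m5 [e5 o5]] := seg2 g4 h4'.
have eA0 : SAp n s ds r A 0 = 0 by rewrite /SAp big_geq.
have eN0 : SNp n s ds r A 0 = 0 by rewrite /SNp big_geq.
have o5' : InvO n s ds r A 0 m5 by rewrite /InvO eA0 eN0.
have [m6 [e6 o6]] := @outer n s ds r A m5 o5'.
have [m7 [e7 f7]] := segF o6.
exists m7; split; last exact: f7. rewrite /Ttot.
apply: (run_seq _ e7); apply: (run_seq _ e6); apply: (run_seq _ e5); apply: (run_seq _ e4).
apply: (run_seq _ e3); apply: (run_seq e1 e2).
Qed.


Lemma init_facts n s ds r (alpha : 'I_n -> nat) (m : memory) :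
  m = (init_config s ds r alpha).2 ->
  m 1 = n /\ m 2 = s /\ m 3 = ds /\ m 4 = r /\ (forall i, i < n -> m (5 + i) = Aof alpha i).
Proof.
move=> ->; split; first by []. split; first by []. split; first by []. split; first by [].
move=> i hi; rewrite /init_config /=.
have -> : 5 + i < 5 + n by lia.
by rewrite addKn.
Qed.

Lemma run_halted t pc m : nth IHalt prog pc = IHalt -> run prog t (pc, m) = (pc, m).
Proof. move=> h; elim: t => // t IH; by rewrite runS /step h. Qed.

Lemma decE n s ds r A :
  f2 n s ds r A * (SN n s ds r A <= SA n s ds r A) = decide n s ds r A.
Proof.
rewrite /f2 /f1 /decide !le1 eqn_leq !bmul.
by rewrite -!andbA.
Qed.

Lemma Ttot_le n : Ttot n <= 200 * n ^ 2 + 200.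
Proof. rewrite /Ttot; nia. Qed.

Theorem theorem5 :
  exists (P : seq instr) (c : nat),
    forall (n s ds r : nat) (alpha : 'I_n -> nat),
      0 < s -> 0 < ds -> 0 < r -> (forall v, alpha v <= s) ->
      let fin := run P (c * n ^ 2 + c) (@init_config n s ds r alpha) in
      halted P fin /\
      ((output fin = 1 /\ biased_dissolution_exists (@complete_rel n) s ds r alpha) \/
       (output fin = 0 /\ ~ biased_dissolution_exists (@complete_rel n) s ds r alpha)).
Proof.
exists prog, 200 => n s ds r alpha hs hds hr hal fin.
have [h1 [h2 [h3 [h4 ha]]]] := @init_facts n s ds r alpha _ erefl.
have [m' [e hout]] := whole h1 h2 h3 h4 ha.
have efin : fin = (121, m').
  rewrite /fin (_ : 200 * n ^ 2 + 200 = Ttot n + (200 * n ^ 2 + 200 - Ttot n)); last first.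
    by have := Ttot_le n; lia.
  by rewrite run_add /init_config e run_halted.
rewrite efin; split; first by [].
rewrite /output /= hout decE.
case hd: (decide n s ds r (Aof alpha)).
- by left; split => //; apply: dir2.
- right; split => // hex; have := dir1 hs hds hr hal hex; by rewrite hd.
Qed.
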